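(* Let $\Gamma_1=(V_1,E_1)$ be a simple undirected graph with a strong edge coloring $\mathcal{E}_1$ with colors from $\mathcal{S}^\circ$, and let $\Gamma_2=(V_2,W_2,E_2)$ be a bipartite graph with a strong edge coloring $\mathcal{E}_2$ with colors from $\mathcal{S}_2$. Let $\mathcal{S}_\circ$ be a set disjoint from $\mathcal{S}^\circ$ with a bijection $\sigma:\mathcal{S}^\circ\to\mathcal{S}_\circ$, and let $\mathcal{E}^\circ,\mathcal{E}_\circ$ be opposing orientations of $\mathcal{E}_1$ with colors from $\mathcal{S}^\circ$ and $\mathcal{S}_\circ$ respectively: for each edge $\{x,u\}\in E_1$ of color $s$, one chosen direction $\langle x,u\rangle$ receives $(\langle x,u\rangle,s)\in\mathcal{E}^\circ$ and the reverse direction receives $(\langle u,x\rangle,\sigma(s))\in\mathcal{E}_\circ$. Let $\mathcal{V}$ be a proper vertex coloring of $\Gamma_1$ with colors from a set $\mathcal{S}'$ disjoint from $\mathcal{S}^\circ\cup\mathcal{S}_\circ$. Let $\Gamma=\Gamma_1:\Gamma_2$ be the bipartite graph with vertex classes $V_1\times V_2$ and $V_1\times W_2$ and edge set $E=\{((x,y),(u,v)) : (y,v)\in E_2, \text{ and } x=u \text{ or } \{x,u\}\in E_1\}$. Then $$\mathcal{E}=\{((x,y),(u,v),(s,s_2)) : (y,v,s_2)\in\mathcal{E}_2; \text{ and either } x=u \text{ with } (x,s)\in\mathcal{V}, \text{ or } (\langle x,u\rangle,s)\in\mathcal{E}^\circ\cup\mathcal{E}_\circ\}$$ is a strong edge coloring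 of $\Gamma$ with colors from $(\mathcal{S}'\cup\mathcal{S}^\circ\cup\mathcal{S}_\circ)\times\mathcal{S}_2$.
   Context: A vertex coloring is written as a set of pairs $(v,s)$, $v$ a vertex and $s$ its color; proper means adjacent vertices get different colors. $\langle x,u\rangle$ denotes the directed edge $x\to u$. For an undirected graph, an edge coloring assigns one color to each edge so that edges sharing a vertex get different colors; it is a strong edge coloring if in addition no two distinct edges of the same color are both adjacent to (share a vertex with) a common edge, i.e. each color class is an induced matching. A bipartite graph is written $(V,W,E)$ with $V\cap W=\emptyset$, $E\subseteq V\times W$, and an edge coloring of it is written as a set of triples $(v,w,s)$ with each edge occurring with exactly one color; the strong condition is the same: if $(v,w,s),(v',w',s)$ are distinct then $v\neq v'$, $w\ne w'$, and neither $(v,w')$ nor $(v',w)$ is an edge. *)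

(* Defs.v *)
Definition simple_graph {V : Type} (E : V -> V -> Prop) : Prop :=
  (forall x u, E x u -> E u x) /\ (forall x, ~ E x x).

(* Strong edge coloring of an undirected graph (V,E) with colors from S:
   c assigns to each edge {x,u} the color c x u (= c u x); each color class
   is an induced matching. *)
Definition strong_edge_coloring {V C : Type} (E : V -> V -> Prop)
  (c : V -> V -> C) (S : C -> Prop) : Prop :=
  (forall x u, E x u -> c x u = c u x) /\
  (forall x u, E x u -> S (c x u)) /\
  (forall x u x' u', E x u -> E x' u' -> c x u = c x' u' ->
     ~ ((x = x' /\ u = u') \/ (x = u' /\ u = x')) ->
     x <> x' /\ x <> u' /\ u <> x' /\ u <> u' /\
     ~ E x x' /\ ~ E x u' /\ ~ E u x' /\ ~ E u u').

Definition proper_vertex_coloring {V C : Type} (E : V -> V -> Prop)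
  (vc : V -> C) (S : C -> Prop) : Prop :=
  (forall x, S (vc x)) /\ (forall x u, E x u -> vc x <> vc u).

Definition strong_bip_edge_coloring {V W C : Type} (E : V -> W -> Prop)
  (col : V -> W -> C -> Prop) (S : C -> Prop) : Prop :=
  (forall v w s, col v w s -> E v w /\ S s) /\
  (forall v w, E v w -> exists s, col v w s /\ forall s', col v w s' -> s' = s) /\
  (forall v w s v' w', col v w s -> col v' w' s -> (v, w) <> (v', w') ->
     v <> v' /\ w <> w' /\ ~ E v w' /\ ~ E v' w).

Definition orientation {V : Type} (E : V -> V -> Prop) (O : V -> V -> Prop) : Prop :=
  (forall x u, O x u -> E x u) /\
  (forall x u, E x u -> (O x u /\ ~ O u x) \/ (O u x /\ ~ O x u)).

Definition E_up {V C : Type} (O : V -> V -> Prop) (c : V -> V -> C)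
  (x u : V) (s : C) : Prop := O x u /\ s = c x u.

Definition E_down {V C : Type} (O : V -> V -> Prop) (c : V -> V -> C)
  (sigma : C -> C) (x u : V) (s : C) : Prop := O u x /\ s = sigma (c x u).

Definition bijection_on {C : Type} (sigma : C -> C) (Sc Sl : C -> Prop) : Prop :=
  (forall s, Sc s -> Sl (sigma s)) /\
  (forall s t, Sc s -> Sc t -> sigma s = sigma t -> s = t) /\
  (forall t, Sl t -> exists s, Sc s /\ sigma s = t).

Definition colon_edge {V1 V2 W2 : Type} (E1 : V1 -> V1 -> Prop)
  (E2 : V2 -> W2 -> Prop) (p : V1 * V2) (q : V1 * W2) : Prop :=
  E2 (snd p) (snd q) /\ ((fst p) = (fst q) \/ E1 (fst p) (fst q)).

Definition colon_coloring {V1 V2 W2 C C2 : Type} (O : V1 -> V1 -> Prop)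
  (c1 : V1 -> V1 -> C) (sigma : C -> C) (vc : V1 -> C)
  (col2 : V2 -> W2 -> C2 -> Prop)
  (p : V1 * V2) (q : V1 * W2) (t : C * C2) : Prop :=
  col2 (snd p) (snd q) (snd t) /\
  (((fst p) = (fst q) /\ vc (fst p) = (fst t)) \/
   E_up O c1 (fst p) (fst q) (fst t) \/ E_down O c1 sigma (fst p) (fst q) (fst t)).

(* Main.v *)
Require Import Defs.
From Stdlib Require Import Classical.

Theorem lemma5p1 (V1 V2 W2 C C2 : Type)
  (E1 : V1 -> V1 -> Prop) (E2 : V2 -> W2 -> Prop)
  (Sc Sl Sp : C -> Prop) (S2 : C2 -> Prop)
  (c1 : V1 -> V1 -> C) (col2 : V2 -> W2 -> C2 -> Prop)
  (sigma : C -> C) (O : V1 -> V1 -> Prop) (vc : V1 -> C)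
  (hG1 : simple_graph E1)
  (hc1 : strong_edge_coloring E1 c1 Sc)
  (hc2 : strong_bip_edge_coloring E2 col2 S2)
  (hdisj : forall s, ~ (Sc s /\ Sl s))
  (hsigma : bijection_on sigma Sc Sl)
  (hO : orientation E1 O)
  (hdisj' : forall s, ~ (Sp s /\ (Sc s \/ Sl s)))
  (hvc : proper_vertex_coloring E1 vc Sp) :
  strong_bip_edge_coloring (colon_edge E1 E2)
    (colon_coloring O c1 sigma vc col2)
    (fun t : C * C2 => (Sp (fst t) \/ Sc (fst t) \/ Sl (fst t)) /\ S2 (snd t)).
Proof.
  destruct hG1 as [Esym Eirr].
  destruct hc1 as [c1sym [c1S c1strong]].
  destruct hc2 as [c2E [c2u c2strong]].
  destruct hsigma as [sigS [siginj sigsurj]].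
  destruct hO as [OE Oor].
  destruct hvc as [vcS vcpr].
  unfold strong_bip_edge_coloring, colon_edge, colon_coloring, E_up, E_down.
  split; [|split].
  - intros [x y] [u v] [s s2]; simpl.
    intros [H2 Hs]. destruct (c2E _ _ _ H2) as [HE HS].
    destruct Hs as [[-> <-] | [[Hxu ->] | [Hux ->]]].
    + split; [split; [exact HE | left; reflexivity] | split; [left; apply vcS | exact HS]].
    + split; [split; [exact HE | right; apply OE; exact Hxu] | split; [right; left; apply c1S, OE, Hxu | exact HS]].
    + assert (E1 x u) by (apply Esym, OE, Hux).
      split; [split; [exact HE | right; assumption] | split; [right; right; apply sigS, c1S; assumption | exact HS]].
  - intros [x y] [u v]; simpl. intros [HE Hxu].
    destruct (c2u _ _ HE) as [s2 [Hs2 Hs2u]].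
    destruct Hxu as [<- | Hxu].
    + exists (vc x, s2). split.
      * simpl. split; [exact Hs2 | left; split; reflexivity].
      * intros [s' s2'] [H2 Hs]; simpl in *. rewrite (Hs2u _ H2).
        destruct Hs as [[_ <-] | [[Hxx _] | [Hxx _]]]; try reflexivity;
        exfalso; apply (Eirr x), OE, Hxx.
    + destruct (Oor _ _ Hxu) as [[Ho Hno] | [Ho Hno]].
      * exists (c1 x u, s2). split.
        -- simpl. split; [exact Hs2 | right; left; split; [exact Ho | reflexivity]].
        -- intros [s' s2'] [H2 Hs]; simpl in *. rewrite (Hs2u _ H2).
           destruct Hs as [[Hx _] | [[_ <-] | [Hx _]]]; try reflexivity; exfalso.
           ++ subst u. apply (Eirr x), Hxu.
           ++ apply Hno, Hx.
      * exists (sigma (c1 x u), s2). split.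
        -- simpl. split; [exact Hs2 | right; right; split; [exact Ho | reflexivity]].
        -- intros [s' s2'] [H2 Hs]; simpl in *. rewrite (Hs2u _ H2).
           destruct Hs as [[Hx _] | [[Hx _] | [_ <-]]]; try reflexivity; exfalso.
           ++ subst u. apply (Eirr x), Hxu.
           ++ apply Hno, Hx.
  - intros [x y] [u v] [s s2] [x' y'] [u' v']; simpl.
    intros [H2 Hs] [H2' Hs'] Hne.
    destruct (c2E _ _ _ H2) as [HE _].
    destruct (c2E _ _ _ H2') as [HE' _].
    destruct (classic ((y, v) = (y', v'))) as [Heq | Hneq].
    + injection Heq as <- <-.
      assert (Hxne : (x, u) <> (x', u')).
      { intros Hc; injection Hc as <- <-; apply Hne; reflexivity. }
      assert (Key : x <> x' /\ u <> u' /\ x <> u' /\ x' <> u /\ ~ E1 x u' /\ ~ E1 x' u).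
      { destruct Hs as [[Hxu Hv] | [[Ho Hc] | [Ho Hc]]];
        destruct Hs' as [[Hxu' Hv'] | [[Ho' Hc'] | [Ho' Hc']]].
        - subst u u'. assert (x <> x') by (intros ->; apply Hxne; reflexivity).
          assert (~ E1 x x') by (intros He; apply (vcpr _ _ He); congruence).
          assert (~ E1 x' x) by (intros He; apply (vcpr _ _ He); congruence).
          repeat split; auto.
        - exfalso. apply (hdisj' s). split; [first [rewrite <- Hv | rewrite <- Hv']; apply vcS | left; first [rewrite Hc' | rewrite Hc]; apply c1S, OE; assumption].
        - exfalso. apply (hdisj' s). split; [first [rewrite <- Hv | rewrite <- Hv']; apply vcS | right; first [rewrite Hc' | rewrite Hc]; apply sigS, c1S, Esym, OE; assumption].
        - exfalso. apply (hdisj' s). split; [first [rewrite <- Hv | rewrite <- Hv']; apply vcS | left; first [rewrite Hc' | rewrite Hc]; apply c1S, OE; assumption].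
        - assert (Hn : ~ ((x = x' /\ u = u') \/ (x = u' /\ u = x'))).
          { intros [[-> ->] | [-> ->]]; [apply Hxne; reflexivity|].
            destruct (Oor _ _ (OE _ _ Ho)) as [[_ Hn] | [_ Hn]]; auto. }
          destruct (c1strong _ _ _ _ (OE _ _ Ho) (OE _ _ Ho') ltac:(congruence) Hn)
            as [h1 [h2 [h3 [h4 [h5 [h6 [h7 h8]]]]]]].
          repeat split; auto.
        - exfalso. apply (hdisj s). split; [rewrite Hc; apply c1S, OE; assumption | rewrite Hc'; apply sigS, c1S, Esym, OE; assumption].
        - exfalso. apply (hdisj' s). split; [first [rewrite <- Hv | rewrite <- Hv']; apply vcS | right; first [rewrite Hc' | rewrite Hc]; apply sigS, c1S, Esym, OE; assumption].
        - exfalso. apply (hdisj s). split; [rewrite Hc'; apply c1S, OE; assumption | rewrite Hc; apply sigS, c1S, Esym, OE; assumption].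
        - assert (E1 x u) by (apply Esym, OE, Ho).
          assert (E1 x' u') by (apply Esym, OE, Ho').
          assert (Hc1 : c1 x u = c1 x' u') by (apply siginj; [apply c1S | apply c1S | congruence]; assumption).
          assert (Hn : ~ ((x = x' /\ u = u') \/ (x = u' /\ u = x'))).
          { intros [[-> ->] | [-> ->]]; [apply Hxne; reflexivity|].
            destruct (Oor _ _ (OE _ _ Ho)) as [[_ Hn] | [_ Hn]]; auto. }
          destruct (c1strong _ _ _ _ H H0 Hc1 Hn)
            as [h1 [h2 [h3 [h4 [h5 [h6 [h7 h8]]]]]]].
          repeat split; auto. }
      destruct Key as [k1 [k2 [k3 [k4 [k5 k6]]]]].
      repeat split.
      * intros Hc; injection Hc; auto.
      * intros Hc; injection Hc; auto.
      * intros [_ [Hc | Hc]]; auto.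
      * intros [_ [Hc | Hc]]; auto.
    + destruct (c2strong _ _ _ _ _ H2 H2' Hneq) as [h1 [h2 [h3 h4]]].
      repeat split.
      * intros Hc; injection Hc; auto.
      * intros Hc; injection Hc; auto.
      * intros [Hc _]; auto.
      * intros [Hc _]; auto.
Qed.
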